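(* Let $d\ge 0$ be an integer and let $G$ be a graph with $n\ge 2$ vertices and $\mathrm{tww}(G)\le d$. Then there exist disjoint sets $X,Y\subseteq V(G)$ with $|X|\ge n/(d+4)$ and $|Y|\ge n/(d+4)$ such that either every vertex of $X$ is adjacent to every vertex of $Y$, or no vertex of $X$ is adjacent to any vertex of $Y$. (That is, the class of graphs of twin-width at most $d$ has the strong Erdős–Hajnal property with $\varepsilon=1/(d+4)$.)
   Context: A trigraph $H$ consists of a vertex set $V(H)$ and two disjoint sets of unordered pairs of distinct vertices: black edges $E(H)$ and red edges $R(H)$. Two vertices are adjacent (neighbors) if they are joined by a black or a red edge. The red graph of $H$ is the graph $(V(H),R(H))$; $H$ is a $d$-trigraph if its red graph has maximum degree at most $d$. A graph is a trigraph with no red edges. Contracting two distinct vertices $u,v$ of a trigraph $H$ yields the trigraph obtained by deleting $u$ and $v$ and adding a new vertex $z$ such that, for every other vertex $x$: $zx$ is a black edge if both $ux$ and $vx$ are black edges; $zx$ is not an edge if $x$ is adjacent to neither $u$ nor $v$; and $zx$ is a red edge otherwise. All edges not incident to $u$ or $v$ are unchanged. A $d$-sequence of an $n$-vertex graph $G$ is a sequence of $d$-trigraphs $G=G_n,G_{n-1},\dots,G_1$ such that $G_1$ has a single vertex and each $G_{i-1}$ is obtained from $G_i$ by one contraction (so $G_i$ has $i$ vertices). The twin-width $\mathrm{tww}(G)$ of $G$ is the minimum $d$ such that $G$ admits a $d$-sequence. *)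

(* Defs.v *)
From mathcomp Require Import all_boot.
Set Implicit Arguments. Unset Strict Implicit. Unset Printing Implicit Defensive.

(* A trigraph whose vertices are named by elements of a finite type T:
   vertex set [tv], black edges [tb], red edges [tr] (relations are only
   meaningful between distinct vertices of [tv]). *)
Record trigraph (T : finType) := Trigraph {
  tv : {set T};
  tb : rel T;
  tr : rel T }.

Section Trigraphs.
Variable T : finType.

Definition tadj (H : trigraph T) (x y : T) : bool := tb H x y || tr H x y.

Definition red_deg (H : trigraph T) (x : T) : nat :=
  #|[set y in tv H | (y != x) && tr H x y]|.

Definition is_dtrigraph (d : nat) (H : trigraph T) : Prop :=
  forall x, x \in tv H -> red_deg H x <= d.

(* Contraction of u and v: u and v are deleted and a new vertex z is added;
   we name the new vertex z by the (now free) name u. *)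
Definition new_black (H : trigraph T) (u v : T) (y : T) : bool :=
  (y != u) && (y != v) && tb H u y && tb H v y.
Definition new_red (H : trigraph T) (u v : T) (y : T) : bool :=
  (y != u) && (y != v) && (tadj H u y || tadj H v y)
  && ~~ (tb H u y && tb H v y).

Definition contract (H : trigraph T) (u v : T) : trigraph T :=
  {| tv := tv H :\ v;
     tb := fun x y =>
       if x == u then new_black H u v y
       else if y == u then new_black H u v x
       else tb H x y;
     tr := fun x y =>
       if x == u then new_red H u v y
       else if y == u then new_red H u v x
       else tr H x y |}.

Definition graph_trigraph (e : rel T) : trigraph T :=
  {| tv := [set: T]; tb := e; tr := fun _ _ => false |}.

(* G has a d-sequence: G = G_n, G_{n-1}, ..., G_1 (here indexed by
   f 0 = G_n, ..., f (n-1) = G_1), all d-trigraphs, each obtained from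
   the previous one by one contraction, the last with a single vertex. *)
Definition has_dseq (e : rel T) (d : nat) : Prop :=
  exists f : nat -> trigraph T,
    [/\ f 0 = graph_trigraph e,
        (forall i, i < #|T|.-1 ->
           exists u v, [/\ u \in tv (f i), v \in tv (f i), u != v &
                           f i.+1 = contract (f i) u v]),
        (forall i, i < #|T| -> is_dtrigraph d (f i)) &
        #|tv (f #|T|.-1)| = 1].

Definition tww_le (e : rel T) (d : nat) : Prop :=
  exists d', d' <= d /\ has_dseq e d'.

End Trigraphs.

(* Main.v *)
Require Import Defs.
From mathcomp Require Import all_boot.
From mathcomp Require Import zify.
Set Implicit Arguments. Unset Strict Implicit.

Section Aux.
Variable T : finType.
Variable e : rel T.

Lemma card_pre (p : T -> T) (S : {set T}) :
  #|[set x | p x \in S]| = \sum_(b in S) #|[set x | p x == b]|.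
Proof.
rewrite -sum1_card (partition_big p (mem S)) /=; last by move=> x; rewrite inE.
apply: eq_bigr => b Hb; rewrite -sum1_card; apply: eq_bigl => x.
rewrite !inE; apply/andP/eqP => [[_ /eqP]|->] //.
Qed.

Definition Inv (H : trigraph T) (p : T -> T) :=
  [/\ forall x, p x \in tv H,
      forall x y, p x != p y -> tb H (p x) (p y) -> e x y &
      forall x y, p x != p y -> ~~ tb H (p x) (p y) -> ~~ tr H (p x) (p y) -> ~~ e x y].

Definition newp (p : T -> T) (u v : T) := fun x => if p x == v then u else p x.

Lemma newpE p u v x : u != v -> newp p u v x != u ->
  [/\ newp p u v x = p x, p x != v & p x != u].
Proof.
rewrite /newp => huv; case: ifP => hv; first by rewrite eqxx.
by move=> hu; split => //; rewrite hv.
Qed.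

Lemma newpU p u v x : newp p u v x = u -> p x = u \/ p x = v.
Proof. by rewrite /newp; case: ifP => [/eqP|]; auto. Qed.

Lemma inv_contract H p u v : symmetric e -> Inv H p -> u \in tv H -> v \in tv H ->
  u != v -> Inv (contract H u v) (newp p u v).
Proof.
move=> esym [Hin Hb Hn] Hu Hv Huv.
have sideb : forall x y, newp p u v x = u -> newp p u v y != u ->
    new_black H u v (newp p u v y) -> e x y.
  move=> x y hx hy; case: (newpE Huv hy) => -> hyv hyu.
  move=> /andP[/andP[/andP[_ _] t1] t2].
  case: (newpU hx) => px; apply: Hb; rewrite px //; by rewrite eq_sym.
have siden : forall x y, newp p u v x = u -> newp p u v y != u ->
    ~~ new_black H u v (newp p u v y) -> ~~ new_red H u v (newp p u v y) -> ~~ e x y.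
  move=> x y hx hy; case: (newpE Huv hy) => -> hyv hyu.
  rewrite /new_black /new_red hyv hyu /= => nb.
  rewrite nb andbT /tadj negb_or !negb_or => /andP[/andP[n1 n2] /andP[n3 n4]].
  case: (newpU hx) => px; apply: Hn; rewrite px //; by rewrite eq_sym.
split.
- move=> x; rewrite /newp; case: ifP => hv; rewrite !inE ?Hu ?Hin andbT //.
  by rewrite hv.
- move=> x y hne; rewrite /=.
  case hx: (newp p u v x == u).
    by move/eqP: hx => hx; apply: sideb => //; move: hne; rewrite hx eq_sym.
  case hy: (newp p u v y == u).
    move/eqP: hy => hy => h; rewrite esym; apply: sideb => //.
    by rewrite hx.
  case: (newpE Huv (negbT hx)) => ex _ _; case: (newpE Huv (negbT hy)) => ey _ _.
  by move: hne; rewrite ex ey => hne; apply: Hb.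
- move=> x y hne; rewrite /=.
  case hx: (newp p u v x == u).
    by move/eqP: hx => hx; apply: siden => //; move: hne; rewrite hx eq_sym.
  case hy: (newp p u v y == u).
    move/eqP: hy => hy => h1 h2; rewrite esym; apply: siden => //.
    by rewrite hx.
  case: (newpE Huv (negbT hx)) => ex _ _; case: (newpE Huv (negbT hy)) => ey _ _.
  by move: hne; rewrite ex ey => hne; apply: Hn.
Qed.


Definition concl (d : nat) := exists X Y : {set T},
    [/\ [disjoint X & Y],
        #|T| <= (d + 4) * #|X|,
        #|T| <= (d + 4) * #|Y| &
        (forall x y, x \in X -> y \in Y -> e x y) \/
        (forall x y, x \in X -> y \in Y -> ~~ e x y)].

Lemma large_step d H p u v :
  symmetric e -> Inv H p -> u \in tv H -> v \in tv H -> u != v ->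
  is_dtrigraph d (contract H u v) ->
  [forall a, (d+4) * #|[set x | p x == a]| < #|T|] ->
  ~~ [forall a, (d+4) * #|[set x | newp p u v x == a]| < #|T|] ->
  concl d.
Proof.
move=> esym HI Hu Hv Huv Hdeg Hsm /forallPn [a Ha].
have [Hin' Hb' Hn'] := inv_contract esym HI Hu Hv Huv.
set H' := contract H u v in Hin' Hb' Hn' Hdeg.
set q := newp p u v in Hin' Hb' Hn' Ha.
set n := #|T| in Hsm Ha *.
have n0 : 0 < n by apply/card_gt0P; exists u.
have preE : forall b, b != u -> b != v -> [set x | q x == b] = [set x | p x == b].
  move=> b bu bv; apply/setP => x; rewrite !inE /q /newp; case: ifP => hv //.
  by move/eqP: hv => ->; rewrite ![_ == b]eq_sym (negbTE bu) (negbTE bv).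
have tvH' : forall b, (b \in tv H') = (b != v) && (b \in tv H).
  by move=> b; rewrite /H' /= !inE.
have smallq : forall b, b != u -> b \in tv H' -> (d+4) * #|[set x | q x == b]| < n.
  move=> b bu; rewrite tvH' => /andP[bv _]; rewrite preE //; exact: (forallP Hsm b).
have au : a = u.
  apply/eqP; apply: contraNT Ha => au.
  case: (boolP (a \in tv H')) => ain; first by rewrite smallq.
  have -> : [set x | q x == a] = set0.
    apply/setP => x; rewrite !inE; apply/negbTE; apply: contraNneq ain => <-; exact: Hin'.
  by rewrite cards0 muln0.
rewrite au -leqNgt in Ha.
set P := [set x | q x == u] in Ha.
have PE : P = [set x | p x == u] :|: [set x | p x == v].
  apply/setP => x; rewrite !inE /q /newp; case: ifP => hv; rewrite ?eqxx ?orbT //.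
  by rewrite ?hv ?orbF.
have Pb : (d+4) * #|P| + 2 <= 2 * n.
  have h1 := forallP Hsm u; have h2 := forallP Hsm v.
  have h3 : #|P| <= #|[set x | p x == u]| + #|[set x | p x == v]|.
    by rewrite PE; exact: (leq_card_setU _ _).1.
  have h4 := leq_mul (leqnn (d+4)) h3. rewrite mulnDr in h4. lia.
set RN := [set y in tv H' | (y != u) && tr H' u y].
have RNd : #|RN| <= d.
  apply: Hdeg; rewrite tvH' Huv; exact: Hu.
set R := [set x | q x \in RN].
have Rb : (d+4) * #|R| <= #|RN| * n.-1.
  rewrite /R card_pre big_distrr /=.
  have : \sum_(b in RN) (d+4) * #|[set x | q x == b]| <= \sum_(b in RN) n.-1.
    apply: leq_sum => b; rewrite inE => /andP[bt /andP[bu _]].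
    by rewrite -ltnS prednK // smallq.
  by rewrite sum_nat_const.
set W := ~: (P :|: R).
have Wb : n <= #|W| + #|P| + #|R|.
  have := cardsC (P :|: R); rewrite -/W -/n => <-.
  have := (leq_card_setU P R).1; lia.
set B := [set y | tb H' u (q y)].
have Wc := cardsID B W.
have Wprop : forall y, y \in W -> q y != u /\ ~~ tr H' u (q y).
  move=> y; rewrite in_setC in_setU negb_or => /andP[yP yR].
  have yu : q y != u by move: yP; rewrite inE.
  split => //; apply: contra yR => tr; rewrite inE inE Hin' yu tr //.
have key : n <= (d+4) * #|W :&: B| \/ n <= (d+4) * #|W :\: B|.
  set y1 := #|W :&: B| in Wc *; set y0 := #|W :\: B| in Wc *.
  set pp := #|P| in Pb Wb *; set rr := #|R| in Rb Wb *; set r := #|RN| in Rb RNd.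
  have h1 := leq_mul (leqnn (d+4)) Wb.
  have h2 : r * n.-1 <= d * n.-1 by apply: leq_mul.
  case: (leqP n ((d+4) * y1)) => c1; first by left.
  case: (leqP n ((d+4) * y0)) => c2; first by right.
  exfalso. rewrite -Wc !mulnDr in h1. nia.
have Pdis : forall Y : {set T}, Y \subset W -> [disjoint P & Y].
  move=> Y YW; rewrite disjoint_subset; apply/subsetP => x xP; rewrite inE.
  apply/negP => /(subsetP YW); by rewrite in_setC in_setU xP.
have qP : forall x, x \in P -> q x = u by move=> x; rewrite inE => /eqP.
case: key => key.
- exists P, (W :&: B); split => //; first by apply: Pdis; apply: subsetIl.
  left => x y xP /setIP[yW yB]; have [yu _] := Wprop y yW.
  apply: Hb'; rewrite (qP x xP) ?(eq_sym u) //; by move: yB; rewrite inE.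
- exists P, (W :\: B); split => //; first by apply: Pdis; apply: subsetDl.
  right => x y xP /setDP[yW yB]; have [yu ytr] := Wprop y yW.
  apply: Hn'; rewrite (qP x xP) ?(eq_sym u) //; by move: yB; rewrite inE.
Qed.

End Aux.

Theorem mainTheorem11 (T : finType) (e : rel T) (d : nat) :
  symmetric e -> irreflexive e ->
  2 <= #|T| ->
  tww_le e d ->
  exists X Y : {set T},
    [/\ [disjoint X & Y],
        #|T| <= (d + 4) * #|X|,
        #|T| <= (d + 4) * #|Y| &
        (forall x y, x \in X -> y \in Y -> e x y) \/
        (forall x y, x \in X -> y \in Y -> ~~ e x y)].
Proof.
move=> esym eirr hn [d' [hd' [f [f0 fstep fdeg flast]]]].
case: (leqP #|T| (d+4)) => hnc.
  have /card_gt1P [a [b [_ _ ab]]] := hn.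
  exists [set a], [set b]; split; rewrite ?cards1 ?muln1 //.
    rewrite disjoint_subset; apply/subsetP => x; rewrite !inE => /eqP ->.
    by rewrite ?inE.
  by case: (boolP (e a b)) => h; [left|right] => x y; rewrite !inE => /eqP -> /eqP ->.
have dseq : forall i, i < #|T| -> is_dtrigraph d (f i).
  by move=> i hi x hx; apply: leq_trans (fdeg i hi x hx) hd'.
have main : forall i, i < #|T| -> exists p, Inv e (f i) p /\
    ([forall a, (d+4) * #|[set x | p x == a]| < #|T|] \/ concl e d).
  elim => [_|i IH hi].
    exists id; rewrite f0; split.
      split; [by move=> x /=; rewrite inE | by move=> x y _ /= | by move=> x y _ /=].
    left; apply/forallP => a.
    have -> : [set x | id x == a] = [set a] by apply/setP => x; rewrite !inE.
    by rewrite cards1 muln1.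
  have [p [HI Hs]] := IH (ltnW hi).
  have hi' : i < #|T|.-1 by lia.
  have [u [v [Hu Hv Huv fE]]] := fstep i hi'.
  exists (newp p u v); split; first by rewrite fE; exact: inv_contract.
  case: Hs => [Hs|]; last by right.
  case: (boolP [forall a, (d+4) * #|[set x | newp p u v x == a]| < #|T|]) => Hs'.
    by left.
  right; apply: (large_step esym HI Hu Hv Huv _ Hs Hs'); rewrite -fE; exact: dseq.
have [p [HI [Hs|//]]] := main #|T|.-1 ltac:(lia).
exfalso; case: HI => Hin _ _.
have [a0 ha0] := cards1P (introT eqP flast).
have E : [set x | p x == a0] = setT.
  by apply/setP => x; rewrite !inE; have := Hin x; rewrite ha0 inE.
have := forallP Hs a0; rewrite E cardsT; lia.
Qed.
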